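(* Let $\tau$ and $\tau'$ be permutations of $F^r$ and $F^{r'}$ respectively, fixing the all-zero vectors, and let $\tau|\tau'$ be the permutation of $F^{r+r'}$ given by $(x|y)\mapsto\tau(x)|\tau'(y)$ for $x\in F^r$, $y\in F^{r'}$. Then: (1) if $SQS_\tau$ and $SQS_{\tau'}$ (of orders $2^{r+1}$ and $2^{r'+1}$) are point transitive, then $SQS_{\tau|\tau'}$ (of order $2^{r+r'+1}$) is point transitive; (2) if $S_\tau$ and $S_{\tau'}$ are coordinate transitive codes, then $S_{\tau|\tau'}$ is coordinate transitive; (3) if $\tau$ and $\tau'$ are induced by automorphisms of regular subgroups of $\mathrm{GA}(r,2)$ and $\mathrm{GA}(r',2)$ respectively, and $S_\tau$, $S_{\tau'}$ are coordinate transitive, then $S_{\tau|\tau'}$ is neighbor transitive.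
   Context: $F=\mathrm{GF}(2)$, $\mathbf 0$ the all-zero vector, $x|y$ concatenation. For $s\ge1$ and a permutation $\rho$ of $F^s$ fixing $\mathbf 0$: index coordinates of $F^{2^s}$ by $F^s$, let $e_a$ be the unit vector at $a$, $\mathcal H=\{x\in F^{2^s}:\sum_{a:x_a=1}a=\mathbf 0,\ \mathrm{wt}(x)\text{ even}\}$, $C\times D=\{x|y:x\in C,y\in D\}$, and $S_\rho=\bigcup_{a\in F^s}(\mathcal H+e_a+e_{\mathbf 0})\times(\mathcal H+e_{\rho(a)}+e_{\rho(\mathbf 0)})\subseteq F^{2^{s+1}}$. Its positions are denoted $(\{a\},\emptyset)$ (first half) and $(\emptyset,\{a\})$ (second half), $(X,Y)$ denotes $\{(\{x\},\emptyset):x\in X\}\cup\{(\emptyset,\{y\}):y\in Y\}$, and $SQS_\rho$ is the Steiner quadruple system of quadruples $\{(\{a,b,c,d\},\emptyset)\}$ and $\{(\emptyset,\{a,b,c,d\})\}$ with $a,b,c,d$ pairwise distinct and $a+b+c+d=\mathbf 0$, together with $\{(\{a,c\},\{b,d\}):\rho(a+c)=b+d\ne\mathbf 0\}$. An SQS is point transitive if its automorphism group is transitive on points. $\mathrm{PAut}(C)=\{\pi:\pi(C)=C\}$ (coordinate permutations, $\pi(y)_i=y_{\pi^{-1}(i)}$); $C$ is coordinate transitive if $\mathrm{PAut}(C)$ is transitive on coordinates. $\mathrm{Aut}(C)$ is the stabilizer of $C$ in the group of maps $y\mapsto x+\pi(y)$; $C$ is neighbor transitive if $\mathrm{Aut}(C)$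 is transitive on $C$ and on the words at distance exactly $1$ from $C$. $\mathrm{GA}(s,2)$ is the group of affine maps $b\mapsto a+Mb$ of $F^s$; a subgroup $G$ is regular if it acts regularly on $F^s$; with $g_a\in G$ the unique element mapping $\mathbf 0$ to $a$, an automorphism $T$ of $G$ induces the permutation $\rho$ of $F^s$ with $T(g_a)=g_{\rho(a)}$. *)

(* Defs.v *)
From HB Require Import structures.
From mathcomp Require Import all_boot all_order all_fingroup all_algebra.
Set Implicit Arguments. Unset Strict Implicit. Unset Printing Implicit Defensive.
Import GRing.Theory.
Local Open Scope ring_scope.

Definition vec (s : nat) := 'rV['F_2]_s.
(* coordinates of F^{2^{s+1}}: inl a = ({a},emptyset), inr a = (emptyset,{a}) *)
Definition pos (s : nat) := (vec s + vec s)%type.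
Definition word (s : nat) := {ffun pos s -> 'F_2}.
(* vectors of F^{2^s}, coordinates indexed by F^s *)
Definition half (s : nat) := {ffun vec s -> 'F_2}.

Definition unitv s (a : vec s) : half s := [ffun b => (b == a)%:R].

Definition inH s (x : half s) : bool :=
  ((\sum_(a | x a == 1) a) == 0) && ~~ odd #|[set a | x a == 1]|.

Definition inCoset s (x : half s) (a b : vec s) : bool :=
  [exists h : half s, inH h && (x == h + unitv a + unitv b)].

Definition lhalf s (w : word s) : half s := [ffun a => w (inl a)].
Definition rhalf s (w : word s) : half s := [ffun a => w (inr a)].

Definition S s (rho : vec s -> vec s) : {set word s} :=
  [set w | [exists a : vec s,
     inCoset (lhalf w) a 0 && inCoset (rhalf w) (rho a) (rho 0)]].

Definition SQS s (rho : vec s -> vec s) : {set {set pos s}} :=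
  [set B : {set pos s} | [exists a : vec s, exists b : vec s,
     exists c : vec s, exists d : vec s,
     [&& [&& a != b, a != c, a != d, b != c, b != d & c != d],
         a + b + c + d == 0 &
         (B == [set inl a; inl b; inl c; inl d])
      || (B == [set inr a; inr b; inr c; inr d])]
     || [&& rho (a + c) == b + d, b + d != 0 &
            B == [set inl a; inl c; inr b; inr d]]]].

Definition sqs_aut s (Q : {set {set pos s}}) (g : {perm pos s}) : bool :=
  [set [set g x | x in B] | B : {set pos s} in Q] == Q.

Definition point_transitive s (Q : {set {set pos s}}) : Prop :=
  forall x y : pos s, exists g : {perm pos s}, sqs_aut Q g /\ g x = y.

Definition permw s (pi : {perm pos s}) (y : word s) : word s :=
  [ffun i => y ((pi^-1)%g i)].

Definition in_PAut s (C : {set word s}) (pi : {perm pos s}) : bool :=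
  [set permw pi y | y in C] == C.

Definition coord_transitive s (C : {set word s}) : Prop :=
  forall i j : pos s, exists pi : {perm pos s}, in_PAut C pi /\ pi i = j.

Definition in_Aut s (C : {set word s}) (x : word s) (pi : {perm pos s}) : bool :=
  [set x + permw pi y | y in C] == C.

Definition hdist s (u v : word s) : nat := #|[set i | u i != v i]|.

Definition neighbors s (C : {set word s}) : {set word s} :=
  [set w | (w \notin C) && [exists c in C, hdist w c == 1%N]].

Definition Aut_transitive_on s (C X : {set word s}) : Prop :=
  forall u v, u \in X -> v \in X ->
    exists (x : word s) (pi : {perm pos s}), in_Aut C x pi /\ x + permw pi u = v.

Definition neighbor_transitive s (C : {set word s}) : Prop :=
  Aut_transitive_on C C /\ Aut_transitive_on C (neighbors C).

(* GA(s,2) as a set of permutations of F^s (row-vector convention b |-> a + b M) *)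
Definition GA s : {set {perm vec s}} :=
  [set g : {perm vec s} | [exists a : vec s, exists M : 'M['F_2]_s,
      (M \in unitmx) && [forall b : vec s, g b == a + b *m M]]].

Definition regular s (G : {set {perm vec s}}) : Prop :=
  forall x y : vec s, exists! g : {perm vec s}, g \in G /\ g x = y.

(* rho is induced by an automorphism T of a regular subgroup G of GA(s,2):
   T(g_a) = g_{rho(a)}, i.e. T(g)(0) = rho(g(0)) for g in G *)
Definition induced_by_regular_aut s (rho : vec s -> vec s) : Prop :=
  exists G : {group {perm vec s}},
    [/\ G \subset GA s, regular G &
        exists T : {perm {perm vec s}}, T \in Aut G /\
          forall g, g \in G -> T g 0 = rho (g 0)].

Definition catperm r r' (tau : vec r -> vec r) (tau' : vec r' -> vec r')
  : vec (r + r') -> vec (r + r') :=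
  fun z => row_mx (tau (lsubmx z)) (tau' (rsubmx z)).

(* Main.v *)
Require Import Defs.
From mathcomp Require Import all_boot all_order all_fingroup all_algebra.
From mathcomp Require Import zify.
Set Implicit Arguments. Unset Strict Implicit. Unset Printing Implicit Defensive.
Import GRing.Theory.
Local Open Scope ring_scope.

Lemma f2_cases (x : 'F_2) : x = 0 \/ x = 1.
Proof. case: x => m Hm. case: m Hm => [|[|m]] Hm.
- by left; apply/val_inj.
- by right; apply/val_inj.
- by [].
Qed.
Lemma f2_dbl (x : 'F_2) : x + x = 0.
Proof. by case: (f2_cases x) => ->; [rewrite addr0 | apply/val_inj]. Qed.
Lemma f2_nat n : (n%:R : 'F_2) = (odd n)%:R.
Proof. elim: n => // n IH. rewrite mulrS IH /=. by case: (odd n) => /=; rewrite ?f2_dbl ?addr0. Qed.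

Section Vec.
Variable s : nat.
Implicit Types a b c d v w x y z : vec s.
Lemma vec_dbl v : v + v = 0.
Proof. by apply/matrixP => i j; rewrite !mxE f2_dbl. Qed.
Lemma oppv v : - v = v.
Proof. by apply/eqP; rewrite eq_sym -subr_eq0 opprK vec_dbl. Qed.
Lemma addKv b x : b + (b + x) = x.
Proof. by rewrite addrA vec_dbl add0r. Qed.
Lemma addvK b x : x + b + b = x.
Proof. by rewrite -addrA vec_dbl addr0. Qed.
Lemma addv_eq0 x y : (x + y == 0) = (x == y).
Proof. by rewrite -(inj_eq (addIr y)) addvK add0r. Qed.
Lemma addv_eq x y z : (x + y == z) = (x == z + y).
Proof. by rewrite -(inj_eq (addIr y)) addvK. Qed.
Lemma addvv2 x y v : (x + v) + (y + v) = x + y.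
Proof. by rewrite addrACA vec_dbl addr0. Qed.
End Vec.

Definition dist4 (T : eqType) (a b c d : T) :=
  [&& a != b, a != c, a != d, b != c, b != d & c != d].

Lemma set4E (T : finType) (a b c d : T) :
  [set a; b; c; d] = [set x in [:: a; b; c; d]].
Proof. by apply/setP => x; rewrite !inE -!orbA. Qed.

Lemma dist4_uniq (T : eqType) (a b c d : T) : dist4 a b c d = uniq [:: a; b; c; d].
Proof. rewrite /dist4 /= !inE !negb_or andbT; by do !bool_congr. Qed.

Lemma card_set4 (T : finType) (a b c d : T) :
  dist4 a b c d -> #|[set a; b; c; d]| = 4%N.
Proof. by rewrite set4E cardsE dist4_uniq => /card_uniqP ->. Qed.

Lemma sum_set4 s (a b c d : vec s) : dist4 a b c d ->
  \sum_(x in [set a; b; c; d]) x = a + b + c + d.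
Proof.
rewrite dist4_uniq => U.
rewrite set4E (eq_bigl (fun x => x \in [:: a; b; c; d])); last by move=> x; rewrite inE.
by rewrite -big_uniq // unlock /= addr0 !addrA.
Qed.

Lemma sum_set2 s (a c : vec s) : a != c -> \sum_(x in [set a; c]) x = a + c.
Proof.
move=> ac; rewrite big_setU1 /= ?inE // big_set1 //.
Qed.

Section SQSbasic.
Variable s : nat.
Variable rho : vec s -> vec s.
Hypothesis rho0 : rho 0 = 0.

Definition lq (a b c d : vec s) : {set pos s} := [set inl a; inl b; inl c; inl d].
Definition rq (a b c d : vec s) : {set pos s} := [set inr a; inr b; inr c; inr d].
Definition mq (a c b d : vec s) : {set pos s} := [set inl a; inl c; inr b; inr d].

Lemma SQS_lq a b c d : dist4 a b c d -> a + b + c + d = 0 -> lq a b c d \in SQS rho.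
Proof.
rewrite /dist4 => D S0; rewrite inE; apply/existsP; exists a; apply/existsP; exists b;
  apply/existsP; exists c; apply/existsP; exists d.
by rewrite /lq D S0 !eqxx.
Qed.

Lemma SQS_rq a b c d : dist4 a b c d -> a + b + c + d = 0 -> rq a b c d \in SQS rho.
Proof.
rewrite /dist4 => D S0; rewrite inE; apply/existsP; exists a; apply/existsP; exists b;
  apply/existsP; exists c; apply/existsP; exists d.
by rewrite /rq D S0 !eqxx orbT.
Qed.

Lemma SQS_mq a c b d : rho (a + c) = b + d -> b + d != 0 -> mq a c b d \in SQS rho.
Proof.
move=> R N; rewrite inE; apply/existsP; exists a; apply/existsP; exists b;
  apply/existsP; exists c; apply/existsP; exists d.
by rewrite /mq R N !eqxx orbT.
Qed.

Lemma SQSP B : B \in SQS rho ->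
  [\/ exists a b c d, [/\ dist4 a b c d, a + b + c + d = 0 & B = lq a b c d],
      exists a b c d, [/\ dist4 a b c d, a + b + c + d = 0 & B = rq a b c d] |
      exists a c b d, [/\ rho (a + c) = b + d, b + d != 0 & B = mq a c b d]].
Proof.
rewrite inE => /existsP[a /existsP[b /existsP[c /existsP[d H]]]].
case/orP: H => [/and3P[D /eqP S /orP[/eqP->|/eqP->]]|/and3P[/eqP R N /eqP->]].
- by constructor 1; exists a, b, c, d.
- by constructor 2; exists a, b, c, d.
- by constructor 3; exists a, c, b, d.
Qed.

Definition Lp (B : {set pos s}) : {set vec s} := [set a | inl a \in B].
Definition Rp (B : {set pos s}) : {set vec s} := [set a | inr a \in B].

Lemma Lp_lq a b c d : Lp (lq a b c d) = [set a; b; c; d].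
Proof. by apply/setP => x; rewrite !inE. Qed.
Lemma Rp_lq a b c d : Rp (lq a b c d) = set0.
Proof. by apply/setP => x; rewrite !inE. Qed.
Lemma Lp_rq a b c d : Lp (rq a b c d) = set0.
Proof. by apply/setP => x; rewrite !inE. Qed.
Lemma Rp_rq a b c d : Rp (rq a b c d) = [set a; b; c; d].
Proof. by apply/setP => x; rewrite !inE. Qed.
Lemma Lp_mq a c b d : Lp (mq a c b d) = [set a; c].
Proof. by apply/setP => x; rewrite !inE !orbF. Qed.
Lemma Rp_mq a c b d : Rp (mq a c b d) = [set b; d].
Proof. by apply/setP => x; rewrite !inE. Qed.

Definition is_inl (p : pos s) := if p is inl _ then true else false.

Lemma card_LR (B : {set pos s}) : #|B| = (#|Lp B| + #|Rp B|)%N.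
Proof.
rewrite -(cardsID [set p | is_inl p] B).
have -> : B :&: [set p | is_inl p] = inl @: Lp B.
  apply/setP => -[x|x]; rewrite !inE /=.
  - rewrite andbT; apply/idP/imsetP => [h|[y]]; first by exists x; rewrite // inE.
    by rewrite inE => h [->].
  - by rewrite ?andbF ?andbT; apply/esym/imsetP => -[y].
have -> : B :\: [set p | is_inl p] = inr @: Rp B.
  apply/setP => -[x|x]; rewrite !inE /=.
  - by rewrite ?andbT ?andbF; apply/esym/imsetP => -[y].
  - rewrite ?andbT; apply/idP/imsetP => [h|[y]]; first by exists x; rewrite // inE.
    by rewrite inE => h [->].
by rewrite !card_imset //; move=> x y [].
Qed.

Lemma dist2 (b d : vec s) : b + d != 0 -> b != d.
Proof. by rewrite addv_eq0. Qed.

Lemma block_card4 B : B \in SQS rho -> #|B| = 4%N.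
Proof.
case/SQSP => [[a [b [c [d [D _ ->]]]]]|[a [b [c [d [D _ ->]]]]]|[a [c [b [d [R N ->]]]]]].
- by rewrite card_set4.
- by rewrite card_set4.
- have ac : a != c by apply: contraNneq N => ac; rewrite -R ac vec_dbl rho0.
  rewrite card_set4 // /dist4 /=; apply/andP; split; [exact: ac | exact: dist2].
Qed.

Lemma block_Lp_even B : B \in SQS rho -> ~~ odd #|Lp B|.
Proof.
case/SQSP => [[a [b [c [d [D _ ->]]]]]|[a [b [c [d [D _ ->]]]]]|[a [c [b [d [R N ->]]]]]].
- by rewrite Lp_lq card_set4.
- by rewrite Lp_rq cards0.
- have ac : a != c by apply: contraNneq N => ac; rewrite -R ac vec_dbl rho0.
  by rewrite Lp_mq cards2 ac.
Qed.

End SQSbasic.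


Ltac f2gen := repeat match goal with |- context [@fun_of_matrix ?R ?m ?n ?M ?i ?j] => let x := fresh "x" in move: (@fun_of_matrix R m n M i j) => x end.
Ltac f2case := repeat match goal with | x : _ |- _ => (case: (f2_cases x) => ->; clear x) end.
Ltac vsolve := apply/matrixP => ? ?; rewrite ?mxE; f2gen; f2case; by apply/eqP.
Ltac vsolve1 H := let i := fresh "i" in let j := fresh "j" in
  move/matrixP: H => H; apply/matrixP => i j; move: (H i j); clear H; rewrite ?mxE;
  f2gen; f2case; move=> /eqP H; apply/eqP; move: H; by [].

Lemma inlE s (a b : vec s) : (inl a == inl b :> pos s) = (a == b). Proof. by []. Qed.
Lemma inrE s (a b : vec s) : (inr a == inr b :> pos s) = (a == b). Proof. by []. Qed.
Lemma inlrE s (a b : vec s) : (inl a == inr b :> pos s) = false. Proof. by []. Qed.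
Lemma inrlE s (a b : vec s) : (inr a == inl b :> pos s) = false. Proof. by []. Qed.
Definition posE := (inlE, inrE, inlrE, inrlE).

Lemma set2_ne0 (T : finType) (x y : T) : [set x; y] = set0 -> False.
Proof. move=> H. have : x \in [set x; y] by rewrite !inE eqxx. by rewrite H inE. Qed.
Lemma set4_ne0 (T : finType) (x y z t : T) : [set x; y; z; t] = set0 -> False.
Proof. move=> H. have : x \in [set x; y; z; t] by rewrite !inE eqxx. by rewrite H inE. Qed.

Section SQSinv.
Variable s : nat.
Variable rho : vec s -> vec s.
Hypothesis rho0 : rho 0 = 0.

Lemma mq_ac a c b d : rho (a + c) = b + d -> b + d != 0 -> a != c.
Proof. by move=> R N; apply: contraNneq N => ac; rewrite -R ac vec_dbl rho0. Qed.

Lemma mq_inv a1 a2 b1 b2 : a1 != a2 -> b1 != b2 ->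
  mq a1 a2 b1 b2 \in SQS rho -> rho (a1 + a2) = b1 + b2.
Proof.
move=> h1 h2; case/SQSP => [[a [b [c [d [D _ E]]]]]|[a [b [c [d [D _ E]]]]]|[a [c [b [d [R N E]]]]]].
- by have := congr1 (@Rp s) E; rewrite Rp_mq Rp_lq => /set2_ne0.
- by have := congr1 (@Lp s) E; rewrite Lp_mq Lp_rq => /set2_ne0.
- have EL := congr1 (@Lp s) E; have ER := congr1 (@Rp s) E.
  rewrite !Lp_mq in EL; rewrite !Rp_mq in ER.
  have ac := mq_ac R N.
  have -> : a1 + a2 = a + c by rewrite -(sum_set2 h1) -(sum_set2 ac) EL.
  by rewrite R -(sum_set2 h2) -(sum_set2 (dist2 N)) ER.
Qed.

Lemma rq_inv a1 a2 a3 a4 : dist4 a1 a2 a3 a4 ->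
  rq a1 a2 a3 a4 \in SQS rho -> a1 + a2 + a3 + a4 = 0.
Proof.
move=> h1; case/SQSP => [[a [b [c [d [D _ E]]]]]|[a [b [c [d [D S E]]]]]|[a [c [b [d [R N E]]]]]].
- by have := congr1 (@Rp s) E; rewrite Rp_rq Rp_lq => /set4_ne0.
- have ER := congr1 (@Rp s) E; rewrite !Rp_rq in ER.
  by rewrite -(sum_set4 h1) ER sum_set4.
- by have := congr1 (@Lp s) E; rewrite Lp_mq Lp_rq => /esym /set2_ne0.
Qed.

Lemma lq_inv a1 a2 a3 a4 : dist4 a1 a2 a3 a4 ->
  lq a1 a2 a3 a4 \in SQS rho -> a1 + a2 + a3 + a4 = 0.
Proof.
move=> h1; case/SQSP => [[a [b [c [d [D S E]]]]]|[a [b [c [d [D _ E]]]]]|[a [c [b [d [R N E]]]]]].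
- have EL := congr1 (@Lp s) E; rewrite !Lp_lq in EL.
  by rewrite -(sum_set4 h1) EL sum_set4.
- by have := congr1 (@Lp s) E; rewrite Lp_lq Lp_rq => /set4_ne0.
- by have := congr1 (@Rp s) E; rewrite Rp_mq Rp_lq => /esym /set2_ne0.
Qed.

End SQSinv.

Section Aut.
Variable s : nat.
Implicit Type Q : {set {set pos s}}.

Lemma sqs_autP Q g : sqs_aut Q g -> forall B, B \in Q -> g @: B \in Q.
Proof. by move=> /eqP H B HB; rewrite -H; apply/imsetP; exists B. Qed.

Lemma sqs_autI Q (g : {perm pos s}) : (forall B, B \in Q -> g @: B \in Q) -> sqs_aut Q g.
Proof.
move=> H; rewrite /sqs_aut eqEcard; apply/andP; split.
  by apply/subsetP => _ /imsetP[B HB ->]; exact: H.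
by rewrite card_imset //; exact: imset_inj (@perm_inj _ g).
Qed.

Lemma sqs_autM Q g h : sqs_aut Q g -> sqs_aut Q h -> sqs_aut Q (g * h)%g.
Proof.
move=> Hg Hh; apply: sqs_autI => B HB.
have -> : (g * h)%g @: B = h @: (g @: B).
  by rewrite -imset_comp; apply: eq_imset => x; rewrite permM.
by apply: (sqs_autP Hh); apply: (sqs_autP Hg).
Qed.

Lemma sqs_autV Q g : sqs_aut Q g -> sqs_aut Q g^-1%g.
Proof.
move=> Hg; apply: sqs_autI => B HB.
move/eqP: Hg => Hg; move: HB; rewrite -{1}Hg => /imsetP[B' HB' ->].
rewrite -imset_comp (eq_imset (g := id)) ?imset_id // => x /=.
by rewrite permK.
Qed.

Lemma imset4 (f : pos s -> pos s) (a b c d : pos s) :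
  f @: [set a; b; c; d] = [set f a; f b; f c; f d].
Proof. by rewrite !imsetU !imset_set1. Qed.

End Aut.

Section Trans.
Variable s : nat.
Variable rho : vec s -> vec s.
Hypothesis rho0 : rho 0 = 0.
Implicit Types a b c d v w : vec s.

Definition trf (v w : vec s) (p : pos s) : pos s :=
  match p with inl a => inl (a + v) | inr b => inr (b + w) end.
Lemma trfK v w : involutive (trf v w).
Proof. by case=> x /=; rewrite addvK. Qed.
Definition trp v w : {perm pos s} := perm (inv_inj (trfK v w)).
Lemma trpE v w p : trp v w p = trf v w p.
Proof. by rewrite permE. Qed.

Lemma dist4_add a b c d v : dist4 (a + v) (b + v) (c + v) (d + v) = dist4 a b c d.
Proof. by rewrite /dist4 !(inj_eq (addIr v)). Qed.

Lemma sum4_add a b c d v : (a + v) + (b + v) + (c + v) + (d + v) = a + b + c + d.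
Proof. by rewrite (addvv2 a b v) -addrA (addvv2 c d v) addrA. Qed.

Lemma trp_aut v w : sqs_aut (SQS rho) (trp v w).
Proof.
apply: sqs_autI => B.
case/SQSP => [[a [b [c [d [D S ->]]]]]|[a [b [c [d [D S ->]]]]]|[a [c [b [d [R N ->]]]]]].
- rewrite /lq imset4 !trpE /=. apply: SQS_lq; by rewrite ?dist4_add ?sum4_add.
- rewrite /rq imset4 !trpE /=. apply: SQS_rq; by rewrite ?dist4_add ?sum4_add.
- rewrite /mq imset4 !trpE /=. apply: SQS_mq; by rewrite !addvv2.
Qed.

End Trans.

Definition additive_f s (f : vec s -> vec s) := forall x y, f (x + y) = f x + f y.
Definition LE s (rho : vec s -> vec s) := exists P Q : vec s -> vec s,
  [/\ additive_f P, additive_f Q, injective P, injective Q & forall v, rho (Q (rho v)) = P v].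

Section Swap.
Variable s : nat.
Variable rho : vec s -> vec s.
Hypothesis rho0 : rho 0 = 0.
Hypothesis rho_inj : injective rho.
Implicit Types a b c d v w x y z : vec s.

Lemma quad_add (f : vec s -> vec s) :
  (forall x y, x != 0 -> y != 0 -> x != y -> f 0 + f x + f y + f (x + y) = 0) ->
  additive_f (fun x => f x + f 0).
Proof.
move=> H x y /=.
have [->|x0] := eqVneq x 0; first by rewrite add0r; vsolve.
have [->|y0] := eqVneq y 0; first by rewrite addr0; vsolve.
have [<-|xy] := eqVneq x y; first by rewrite vec_dbl; vsolve.
have E := H x y x0 y0 xy; vsolve1 E.
Qed.

Lemma eq_addr x y : (x == x + y) = (y == 0).
Proof. by rewrite -{1}(addr0 x) (inj_eq (addrI x)) eq_sym. Qed.
Lemma eq_addl x y : (y == x + y) = (x == 0).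
Proof. by rewrite addrC eq_addr. Qed.

Lemma dist4_inj (f : vec s -> vec s) a b c d : injective f -> dist4 a b c d ->
  dist4 (f a) (f b) (f c) (f d).
Proof. by move=> fi; rewrite /dist4 !(inj_eq fi). Qed.

Lemma dist4_0xy x y : x != 0 -> y != 0 -> x != y -> dist4 0 x y (x + y).
Proof.
move=> x0 y0 xy; rewrite /dist4 !(eq_sym 0) x0 y0 xy eq_addr eq_addl y0 x0 /=.
by rewrite andbT; move: xy; apply: contra => /eqP h; apply/eqP; vsolve1 h.
Qed.

Lemma rho_neq0 v : v != 0 -> rho v != 0.
Proof. by move=> v0; rewrite -rho0 (inj_eq rho_inj). Qed.

Lemma swap_LE (phi : {perm pos s}) alpha beta : sqs_aut (SQS rho) phi ->
  (forall a, phi (inl a) = inr (alpha a)) -> (forall b, phi (inr b) = inl (beta b)) ->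
  LE rho.
Proof.
move=> Ha Hal Hbe.
have ainj : injective alpha.
  move=> x y E; have : phi (inl x) = phi (inl y) by rewrite !Hal E.
  by move/perm_inj => [].
have binj : injective beta.
  move=> x y E; have : phi (inr x) = phi (inr y) by rewrite !Hbe E.
  by move/perm_inj => [].
exists (fun x => alpha x + alpha 0), (fun y => beta y + beta 0); split.
- apply: quad_add => x y x0 y0 xy.
  have D := dist4_0xy x0 y0 xy.
  have B := sqs_autP Ha (SQS_lq rho D (ltac:(vsolve))).
  rewrite /lq imset4 !Hal in B.
  exact: (rq_inv (dist4_inj ainj D) B).
- apply: quad_add => x y x0 y0 xy.
  have D := dist4_0xy x0 y0 xy.
  have B := sqs_autP Ha (SQS_rq rho D (ltac:(vsolve))).
  rewrite /rq imset4 !Hbe in B.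
  exact: (lq_inv (dist4_inj binj D) B).
- by move=> x y /addIr /ainj.
- by move=> x y /addIr /binj.
move=> v; have [->|v0] := eqVneq v 0; first by rewrite rho0 !vec_dbl rho0.
have M : mq 0 v 0 (rho v) \in SQS rho.
  by apply: SQS_mq; [rewrite !add0r | rewrite add0r rho_neq0].
have B := sqs_autP Ha M.
rewrite /mq imset4 !Hal !Hbe in B.
have E : [set inr (alpha 0); inr (alpha v); inl (beta 0); inl (beta (rho v))] =
   mq (beta 0) (beta (rho v)) (alpha 0) (alpha v).
  by apply/setP => z; rewrite !inE -!orbA; apply/idP/idP => /or4P[]/eqP->; rewrite eqxx ?orbT.
rewrite E in B.
have h1 : beta 0 != beta (rho v) by rewrite (inj_eq binj) eq_sym rho_neq0.
have h2 : alpha 0 != alpha v by rewrite (inj_eq ainj) eq_sym.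
by rewrite addrC (mq_inv rho0 h1 h2 B) addrC.
Qed.

End Swap.

Section PT.
Variable s : nat.
Variable rho : {perm vec s}.
Hypothesis rho0 : rho 0 = 0.
Implicit Types a b c d v w x y z : vec s.

Lemma rinj : injective rho. Proof. exact: perm_inj. Qed.

Lemma set4_perm1 (T : finType) (x1 x2 x3 x4 : T) :
  [set x1; x2; x3; x4] = [set x3; x4; x1; x2].
Proof.
by apply/setP => z; rewrite !inE -!orbA; apply/idP/idP => /or4P[]/eqP->; rewrite eqxx ?orbT.
Qed.

Lemma same_side_trans (X Y : pos s) : X != Y -> is_inl X = is_inl Y ->
  exists t, [/\ sqs_aut (SQS rho) t, t X = Y, t Y = X &
    forall Z, Z != X -> Z != Y -> [set X; Y; Z; t Z] \in SQS rho].
Proof.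
case: X Y => [p|p] [q|q] //= pq0 _; have pq : p != q := pq0.
- exists (trp (p + q) (rho (p + q))); split.
  + exact: trp_aut.
  + by rewrite trpE /= addKv.
  + by rewrite trpE /= (addrC p) addKv.
  case=> [z|b] h1 h2; rewrite trpE /=.
  + apply: SQS_lq; last by vsolve.
    have hz1 : z != p := h1. have hz2 : z != q := h2.
    rewrite /dist4 pq (eq_sym p) hz1 (eq_sym q) hz2 /=.
    apply/and3P; split.
    * by move: hz2; apply: contra => /eqP h; apply/eqP; vsolve1 h.
    * by move: hz1; apply: contra => /eqP h; apply/eqP; vsolve1 h.
    * by move: pq; apply: contra => /eqP h; apply/eqP; vsolve1 h.
  + apply: SQS_mq; first by rewrite addKv.
    rewrite addKv -rho0 (inj_eq rinj).
    by move: pq; apply: contra => /eqP h; apply/eqP; vsolve1 h.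
- set v := (rho^-1)%g (p + q).
  have rv : rho v = p + q by rewrite /v permKV.
  exists (trp v (p + q)); split.
  + exact: trp_aut.
  + by rewrite trpE /= addKv.
  + by rewrite trpE /= (addrC p) addKv.
  case=> [z|b] h1 h2; rewrite trpE /=.
  + rewrite set4_perm1; apply: SQS_mq; first by rewrite addKv.
    by move: pq; apply: contra => /eqP h; apply/eqP; vsolve1 h.
  + apply: SQS_rq; last by vsolve.
    have hz1 : b != p := h1. have hz2 : b != q := h2.
    rewrite /dist4 pq (eq_sym p) hz1 (eq_sym q) hz2 /=.
    apply/and3P; split.
    * by move: hz2; apply: contra => /eqP h; apply/eqP; vsolve1 h.
    * by move: hz1; apply: contra => /eqP h; apply/eqP; vsolve1 h.
    * by move: pq; apply: contra => /eqP h; apply/eqP; vsolve1 h.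
Qed.

Lemma no_3L x y a w : [set inl x; inr y; inl a; inl w] \notin SQS rho.
Proof.
apply/negP => B; have := block_card4 rho0 B; have := block_Lp_even rho0 B.
have -> : Lp [set inl x; inr y; inl a; inl w] = [set x; a; w].
  by apply/setP => z; rewrite !inE /= orbF.
have -> : #|[set inl x; inr y; inl a; inl w]| = (#|[set x; a; w]| + 1)%N.
  rewrite card_LR; congr (_ + _)%N.
    by apply: eq_card => z; rewrite !inE !posE /= orbF.
  have -> : Rp [set inl x; inr y; inl a; inl w] = [set y].
    by apply/setP => z; rewrite !inE !posE /= ?orbF.
  by rewrite cards1.
move=> Hev H4; have H3 : #|[set x; a; w]| = 3%N by move: H4; rewrite addn1 => -[].
by rewrite H3 in Hev.
Qed.

Lemma no_3R x y b w : [set inl x; inr y; inr b; inr w] \notin SQS rho.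
Proof.
apply/negP => B; have := block_Lp_even rho0 B.
have -> : Lp [set inl x; inr y; inr b; inr w] = [set x].
  by apply/setP => z; rewrite !inE !posE /= ?orbF.
by rewrite cards1.
Qed.

Lemma PT_LE : point_transitive (SQS rho) -> LE rho.
Proof.
move=> PT; have [g [Hg g0]] := PT (inl 0) (inr 0).
set h := (g^-1)%g.
have Hh : sqs_aut (SQS rho) h := sqs_autV Hg.
have h0 : h (inr 0) = inl 0 by rewrite -g0 /h permK.
have hinj := @perm_inj _ h.
case: (boolP [exists x, exists y, is_inl (h (inl x)) == is_inl (h (inr y))]).
- move=> /existsP[x /existsP[y /eqP Hs]].
  have Hne : h (inl x) != h (inr y) by rewrite (inj_eq hinj).
  have [t [Ht tX tY tZ]] := same_side_trans Hne Hs.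
  set N := (h * t * g)%g.
  have HN : sqs_aut (SQS rho) N by apply: sqs_autM => //; apply: sqs_autM.
  have NE : forall Z, N Z = g (t (h Z)) by move=> Z; rewrite !permM.
  have NX : N (inl x) = inr y by rewrite NE tX /h permKV.
  have NY : N (inr y) = inl x by rewrite NE tY /h permKV.
  have NB : forall Z, Z != inl x -> Z != inr y -> [set inl x; inr y; Z; N Z] \in SQS rho.
    move=> Z h1 h2.
    have := sqs_autP Hg (tZ (h Z) (ltac:(by rewrite (inj_eq hinj))) (ltac:(by rewrite (inj_eq hinj)))).
    by rewrite imset4 /h !permKV -/h -NE.
  pose alpha a := if N (inl a) is inr b then b else 0.
  pose beta b := if N (inr b) is inl a then a else 0.
  apply: (@swap_LE s rho rho0 rinj N alpha beta HN).
  + move=> a; rewrite /alpha; have [->|ax] := eqVneq a x; first by rewrite NX.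
    have := NB (inl a) (ltac:(by [])) (ltac:(by [])).
    by case: (N (inl a)) => w //; rewrite (negbTE (no_3L _ _ _ _)).
  + move=> b; rewrite /beta; have [->|bx] := eqVneq b y; first by rewrite NY.
    have := NB (inr b) (ltac:(by [])) (ltac:(by [])).
    case: (N (inr b)) => w //.
    rewrite -[[set _; _; _; _]]/([set inl x; inr y; inr b; inr w]).
    by rewrite (negbTE (no_3R _ _ _ _)).
- move=> Hn.
  have Hd : forall x y, is_inl (h (inl x)) != is_inl (h (inr y)).
    move=> x y; apply: contraNN Hn => E; apply/existsP; exists x; apply/existsP; exists y; exact: E.
  pose alpha a := if h (inl a) is inr b then b else 0.
  pose beta b := if h (inr b) is inl a then a else 0.
  have HA : forall a, h (inl a) = inr (alpha a).
    move=> a; have := Hd a 0; rewrite h0 /alpha.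
    by case: (h (inl a)).
  apply: (@swap_LE s rho rho0 rinj h alpha beta Hh HA).
  move=> b; have := Hd 0 b; rewrite HA /beta.
  by case: (h (inr b)).
Qed.

End PT.

Section LEtrans.
Variable s : nat.
Variable rho : vec s -> vec s.
Hypothesis rho0 : rho 0 = 0.
Variables P Q : vec s -> vec s.
Hypothesis Padd : additive_f P.
Hypothesis Qadd : additive_f Q.
Hypothesis Pinj : injective P.
Hypothesis Qinj : injective Q.
Hypothesis PQ : forall v, rho (Q (rho v)) = P v.
Implicit Types a b c d v w x y z : vec s.

Lemma add0f (f : vec s -> vec s) : additive_f f -> f 0 = 0.
Proof. move=> fa; have h := fa 0 0; rewrite addr0 in h. by rewrite h vec_dbl. Qed.

Definition swf v w (p : pos s) : pos s :=
  match p with inl a => inr (P a + w) | inr b => inl (Q b + v) end.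
Lemma swf_inj v w : injective (swf v w).
Proof.
by case=> [x|x] [y|y] //= [] /addIr H; congr (_ _); [apply: Pinj | apply: Qinj].
Qed.
Definition swp v w : {perm pos s} := perm (@swf_inj v w).
Lemma swpE v w p : swp v w p = swf v w p.
Proof. by rewrite permE. Qed.

Lemma sum4_map (f : vec s -> vec s) w a b c d : additive_f f ->
  (f a + w) + (f b + w) + (f c + w) + (f d + w) = f (a + b + c + d).
Proof. by move=> fa; rewrite sum4_add !fa. Qed.

Lemma addr_inj (f : vec s -> vec s) w : injective f -> injective (fun x => f x + w).
Proof. by move=> fi x y /addIr /fi. Qed.

Lemma swp_aut v w : sqs_aut (SQS rho) (swp v w).
Proof.
apply: sqs_autI => B.
case/SQSP => [[a [b [c [d [D S ->]]]]]|[a [b [c [d [D S ->]]]]]|[a [c [b [d [R N ->]]]]]].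
- rewrite /lq imset4 !swpE /=. apply: SQS_rq.
    apply: (@dist4_inj _ (fun x => P x + w) a b c d) => //. exact: addr_inj.
  by rewrite sum4_map // S add0f.
- rewrite /rq imset4 !swpE /=. apply: SQS_lq.
    apply: (@dist4_inj _ (fun x => Q x + v) a b c d) => //. exact: addr_inj.
  by rewrite sum4_map // S add0f.
- rewrite /mq imset4 !swpE /= set4_perm1. apply: SQS_mq.
    by rewrite addvv2 -Qadd -R PQ Padd addvv2.
  rewrite addvv2 -Padd -(add0f Padd) (inj_eq Pinj) addv_eq0.
  exact: (mq_ac rho0 R N).
Qed.

Lemma LE_PT : point_transitive (SQS rho).
Proof.
case=> [a|b] [a'|b'].
- exists (trp (a + a') 0); split; first exact: trp_aut.
  by rewrite trpE /= addKv.
- exists (swp 0 (P a + b')); split; first exact: swp_aut.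
  by rewrite swpE /= addKv.
- exists (swp (Q b + a') 0); split; first exact: swp_aut.
  by rewrite swpE /= addKv.
- exists (trp 0 (b + b')); split; first exact: trp_aut.
  by rewrite trpE /= addKv.
Qed.

End LEtrans.

Lemma LE_PT' s (rho : vec s -> vec s) : rho 0 = 0 -> LE rho -> point_transitive (SQS rho).
Proof. by move=> r0 [P [Q [Pa Qa Pi Qi PQ]]]; exact: (LE_PT r0 Pa Qa Pi Qi PQ). Qed.

Section Prod.
Variables r r' : nat.

Lemma lsubD (x y : vec (r + r')) : lsubmx (x + y) = lsubmx x + lsubmx y.
Proof. by apply/matrixP => i j; rewrite !mxE. Qed.
Lemma rsubD (x y : vec (r + r')) : rsubmx (x + y) = rsubmx x + rsubmx y.
Proof. by apply/matrixP => i j; rewrite !mxE. Qed.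

Definition pairf (f : vec r -> vec r) (f' : vec r' -> vec r') (z : vec (r + r')) : vec (r + r') :=
  row_mx (f (lsubmx z)) (f' (rsubmx z)).

Lemma pairf_add f f' : additive_f f -> additive_f f' -> additive_f (pairf f f').
Proof. by move=> fa fa' x y; rewrite /pairf lsubD rsubD fa fa' add_row_mx. Qed.

Lemma pairf_inj f f' : injective f -> injective f' -> injective (pairf f f').
Proof.
move=> fi fi' x y /eq_row_mx [/fi h1 /fi' h2].
by rewrite -(hsubmxK x) -(hsubmxK y) h1 h2.
Qed.

Lemma LE_prod (tau : vec r -> vec r) (tau' : vec r' -> vec r') :
  LE tau -> LE tau' -> LE (catperm tau tau').
Proof.
move=> [P [Q [Pa Qa Pi Qi PQ]]] [P' [Q' [Pa' Qa' Pi' Qi' PQ']]].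
exists (pairf P P'), (pairf Q Q'); split.
- exact: pairf_add.
- exact: pairf_add.
- exact: pairf_inj.
- exact: pairf_inj.
move=> v; rewrite /catperm /pairf !row_mxKl !row_mxKr.
by rewrite PQ PQ'.
Qed.

Lemma catperm0 (tau : vec r -> vec r) (tau' : vec r' -> vec r') :
  tau 0 = 0 -> tau' 0 = 0 -> catperm tau tau' 0 = 0.
Proof.
move=> h h'; rewrite /catperm.
have -> : lsubmx (0 : vec (r + r')) = 0 by apply/matrixP => i j; rewrite !mxE.
have -> : rsubmx (0 : vec (r + r')) = 0 by apply/matrixP => i j; rewrite !mxE.
by rewrite h h' row_mx0.
Qed.

End Prod.

Section Code.
Variable s : nat.
Implicit Types a b c d v w : vec s.
Implicit Types x y h : Defs.half s.

Definition sig x : vec s := \sum_a x a *: a.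
Definition par x : 'F_2 := \sum_a x a.

Lemma sigD x y : sig (x + y) = sig x + sig y.
Proof. by rewrite /sig -big_split; apply: eq_bigr => a _; rewrite ffunE scalerDl. Qed.
Lemma parD x y : par (x + y) = par x + par y.
Proof. by rewrite /par -big_split; apply: eq_bigr => a _; rewrite ffunE. Qed.

Lemma sig_unit a : sig (unitv a) = a.
Proof.
rewrite /sig (bigD1 a) //= big1 ?addr0; first by rewrite ffunE eqxx scale1r.
by move=> b ba; rewrite ffunE (negbTE ba) scale0r.
Qed.
Lemma par_unit a : par (unitv a) = 1.
Proof.
rewrite /par (bigD1 a) //= big1 ?addr0; first by rewrite ffunE eqxx.
by move=> b ba; rewrite ffunE (negbTE ba).
Qed.

Lemma half_dbl x : x + x = 0.
Proof. by apply/ffunP => i; rewrite !ffunE f2_dbl. Qed.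

Lemma f2_eq1 (k : 'F_2) : (k == 1) = (k != 0).
Proof. by case: (f2_cases k) => ->. Qed.

Lemma inH_iff x : inH x = (sig x == 0) && (par x == 0).
Proof.
rewrite /inH; congr (_ && _).
  congr (_ == 0); rewrite /sig [RHS](bigID (fun a => x a == 1)) /= [X in _ = _ + X]big1 ?addr0.
    by apply: eq_bigr => a /eqP ->; rewrite scale1r.
  by move=> a; rewrite f2_eq1 negbK => /eqP ->; rewrite scale0r.
rewrite /par (bigID (fun a => x a == 1)) /= [X in _ + X]big1 ?addr0; last first.
  by move=> a; rewrite f2_eq1 negbK => /eqP ->.
rewrite (eq_bigr (fun _ => 1)); last by move=> a /eqP.
rewrite sumr_const -[_ *+ _]/(_%:R) f2_nat.
have -> : #|[set a | x a == 1]| = #|[pred a | x a == 1]| by apply: eq_card => a; rewrite inE.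
by case: (odd _).
Qed.

Lemma inCoset_iff x a b : inCoset x a b = (sig x == a + b) && (par x == 0).
Proof.
apply/existsP/andP => [[h /andP[]]|[/eqP S /eqP P]].
  rewrite inH_iff => /andP[/eqP S0 /eqP P0] /eqP ->.
  by rewrite !sigD !parD S0 P0 !sig_unit !par_unit !add0r f2_dbl.
exists (x + unitv a + unitv b); rewrite inH_iff !sigD !parD S P !sig_unit !par_unit.
have -> : a + b + a + b = 0 by vsolve.
rewrite add0r f2_dbl !eqxx /=.
apply/eqP/ffunP => i; rewrite !ffunE; case: (i == a); case: (i == b);
  case: (f2_cases (x i)) => ->; by apply/eqP.
Qed.

Lemma S_iff (rho : vec s -> vec s) (w : word s) : rho 0 = 0 ->
  (w \in S rho) = [&& par (lhalf w) == 0, par (rhalf w) == 0 & sig (rhalf w) == rho (sig (lhalf w))].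
Proof.
move=> r0; rewrite inE; apply/existsP/and3P => [[a /andP[]]|[P1 P2 /eqP S2]].
  rewrite !inCoset_iff r0 !addr0 => /andP[/eqP -> ->] /andP[/eqP -> ->].
  by rewrite !eqxx.
by exists (sig (lhalf w)); rewrite !inCoset_iff r0 !addr0 P1 P2 S2 !eqxx.
Qed.

End Code.

Section Ind.
Variable s : nat.
Implicit Types a b c d v w : vec s.

Definition ind (B : {set pos s}) : word s := [ffun i => (i \in B)%:R].

Lemma sig_indL B : sig (lhalf (ind B)) = \sum_(a in Lp B) a.
Proof.
rewrite /sig (bigID (fun a => a \in Lp B)) /= [X in _ + X]big1 ?addr0.
  by apply: eq_bigr => a; rewrite !ffunE inE => ->; rewrite scale1r.
by move=> a; rewrite !ffunE inE => /negbTE ->; rewrite scale0r.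
Qed.
Lemma sig_indR B : sig (rhalf (ind B)) = \sum_(a in Rp B) a.
Proof.
rewrite /sig (bigID (fun a => a \in Rp B)) /= [X in _ + X]big1 ?addr0.
  by apply: eq_bigr => a; rewrite !ffunE inE => ->; rewrite scale1r.
by move=> a; rewrite !ffunE inE => /negbTE ->; rewrite scale0r.
Qed.
Lemma par_indL B : par (lhalf (ind B)) = (#|Lp B|)%:R.
Proof.
rewrite /par (bigID (fun a => a \in Lp B)) /= [X in _ + X]big1 ?addr0.
  by rewrite (eq_bigr (fun _ => 1)) ?sumr_const // => a; rewrite !ffunE inE => ->.
by move=> a; rewrite !ffunE inE => /negbTE ->.
Qed.
Lemma par_indR B : par (rhalf (ind B)) = (#|Rp B|)%:R.
Proof.
rewrite /par (bigID (fun a => a \in Rp B)) /= [X in _ + X]big1 ?addr0.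
  by rewrite (eq_bigr (fun _ => 1)) ?sumr_const // => a; rewrite !ffunE inE => ->.
by move=> a; rewrite !ffunE inE => /negbTE ->.
Qed.

Lemma f2_odd n : ((n%:R : 'F_2) == 0) = ~~ odd n.
Proof. by rewrite f2_nat; case: (odd n). Qed.

Lemma B_LR (B : {set pos s}) : B = inl @: Lp B :|: inr @: Rp B.
Proof.
apply/setP => -[x|x]; rewrite !inE.
- rewrite mem_imset; last by move=> ? ? [].
  by rewrite inE; case: (inl x \in B) => //=; apply/esym/negbTE/imsetP => -[].
- rewrite [X in _ || X]mem_imset; last by move=> ? ? [].
  by rewrite inE; case: (inr x \in B); rewrite ?orbT //= orbF; apply/esym/negbTE/imsetP => -[].
Qed.

Lemma card4P (T : finType) (X : {set T}) : #|X| = 4%N ->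
  exists (a b c d : T), dist4 a b c d /\ X = [set a; b; c; d].
Proof.
move=> C4; have /card_gt0P [a aX] : (0 < #|X|)%N by rewrite C4.
have C3 : #|X :\ a| = 3%N by rewrite (cardsD1 a X) aX in C4; case: C4.
have /card_gt0P [b bX] : (0 < #|X :\ a|)%N by rewrite C3.
have C2 : #|X :\ a :\ b| = 2%N by rewrite (cardsD1 b (X :\ a)) bX in C3; case: C3.
have /cards2P [c [d [cd E]]] := introT eqP C2.
have cX : c \in X :\ a :\ b by rewrite E set21.
have dX : d \in X :\ a :\ b by rewrite E set22.
have bX' := bX; have cX' := cX; have dX' := dX.
move: bX' cX' dX'; rewrite !inE => /andP[ba bXX] /and3P[cb ca cXX] /and3P[db da dXX].
exists a, b, c, d; split.
  by rewrite /dist4 eq_sym ba eq_sym ca eq_sym da eq_sym cb eq_sym db cd.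
apply/setP => x; rewrite !inE; apply/idP/idP => [xX|].
  have [->|xa] := eqVneq x a; first by rewrite ?orbT.
  have [->|xb] := eqVneq x b; first by rewrite ?orbT.
  have : x \in X :\ a :\ b by rewrite !inE xa xb xX.
  by rewrite E !inE => /orP[] ->; rewrite ?orbT.
by move=> /orP[/orP[/orP[]|]|] /eqP ->.
Qed.

End Ind.

Section IndBlock.
Variable s : nat.
Variable rho : vec s -> vec s.
Hypothesis rho0 : rho 0 = 0.
Implicit Types a b c d v w : vec s.

Lemma block_ind B : B \in SQS rho -> ind B \in S rho.
Proof.
move=> HB; rewrite S_iff // sig_indL sig_indR par_indL par_indR !f2_odd.
have HR : ~~ odd #|Rp B|.
  have := block_card4 rho0 HB; rewrite card_LR => /(congr1 odd).
  by rewrite oddD (negbTE (block_Lp_even rho0 HB)) /= => ->.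
rewrite (block_Lp_even rho0 HB) HR /=.
case/SQSP: HB => [[a [b [c [d [D S0 ->]]]]]|[a [b [c [d [D S0 ->]]]]]|[a [c [b [d [R N ->]]]]]].
- by rewrite Lp_lq Rp_lq big_set0 sum_set4 // S0 rho0.
- by rewrite Lp_rq Rp_rq big_set0 sum_set4 // S0 rho0.
- by rewrite Lp_mq Rp_mq (sum_set2 (mq_ac rho0 R N)) (sum_set2 (dist2 N)) R eqxx.
Qed.

Hypothesis rho_inj : injective rho.

Lemma imset_inl4 a b c d : inl @: [set a; b; c; d] = lq a b c d :> {set pos s}.
Proof. by rewrite /lq !imsetU !imset_set1. Qed.
Lemma imset_inr4 a b c d : inr @: [set a; b; c; d] = rq a b c d :> {set pos s}.
Proof. by rewrite /rq !imsetU !imset_set1. Qed.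

Lemma ind_block (B : {set pos s}) : #|B| = 4%N -> ind B \in S rho -> B \in SQS rho.
Proof.
move=> C4; rewrite S_iff // sig_indL sig_indR par_indL par_indR !f2_odd => /and3P[PL PR /eqP SR].
have HLR := card_LR B; rewrite C4 in HLR.
move EL: #|Lp B| => nL; move ER: #|Rp B| => nR; rewrite EL ER in HLR PL PR.
rewrite (B_LR B).
case: nL EL HLR PL => [|[|[|[|[|nL]]]]] EL HLR PL //; try lia;
case: nR ER HLR PR => [|[|[|[|[|nR]]]]] ER HLR PR //; try lia.
- have EL0 := cards0_eq EL.
  have [a [b [c [d [D ER4]]]]] := card4P ER.
  rewrite EL0 ER4 in SR *.
  rewrite imset0 set0U imset_inr4; apply: SQS_rq => //.
  by rewrite -sum_set4 // SR big_set0 rho0.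
- have /cards2P [a [c [ac EL2]]] := introT eqP EL.
  have /cards2P [b [d [bd ER2]]] := introT eqP ER.
  rewrite EL2 ER2 in SR *.
  rewrite !imsetU !imset_set1 setUA; apply: SQS_mq.
    by rewrite -(sum_set2 ac) -(sum_set2 bd) SR.
  by rewrite addv_eq0.
- have ER0 := cards0_eq ER.
  have [a [b [c [d [D EL4]]]]] := card4P EL.
  rewrite ER0 EL4 in SR *.
  rewrite imset0 setU0 imset_inl4; apply: SQS_lq => //.
  by apply: rho_inj; rewrite rho0 -sum_set4 // -SR big_set0.
Qed.

Lemma permw_ind (pi : {perm pos s}) B : permw pi (ind B) = ind (pi @: B).
Proof.
apply/ffunP => i; rewrite !ffunE; congr (_%:R).
by rewrite -{2}(permKV pi i) mem_imset //; exact: perm_inj.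
Qed.

Lemma PAut_sqs (pi : {perm pos s}) : in_PAut (S rho) pi -> sqs_aut (SQS rho) pi.
Proof.
move=> /eqP Hpi; apply: sqs_autI => B HB; apply: ind_block.
  by rewrite card_imset ?(block_card4 rho0 HB) //; exact: perm_inj.
rewrite -permw_ind -Hpi; apply/imsetP; exists (ind B) => //; exact: block_ind.
Qed.

Lemma CT_PT : coord_transitive (S rho) -> point_transitive (SQS rho).
Proof. by move=> CT x y; have [pi [Hpi Hxy]] := CT x y; exists pi; split => //; exact: PAut_sqs. Qed.

End IndBlock.

Section PAutGen.
Variable s : nat.
Implicit Types a b c d v w : vec s.

Lemma permwK (pi : {perm pos s}) : cancel (permw pi) (permw pi^-1).
Proof. by move=> y; apply/ffunP => i; rewrite !ffunE invgK permK. Qed.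
Lemma permw_inj (pi : {perm pos s}) : injective (permw pi).
Proof. exact: can_inj (permwK pi). Qed.

Lemma in_PAutI (C : {set word s}) pi :
  (forall y, y \in C -> permw pi y \in C) -> in_PAut C pi.
Proof.
move=> H; rewrite /in_PAut eqEcard; apply/andP; split.
  by apply/subsetP => _ /imsetP[y Hy ->]; exact: H.
by rewrite card_imset //; exact: permw_inj.
Qed.

Lemma f2_scale (f : vec s -> vec s) (k : 'F_2) b : additive_f f -> f (k *: b) = k *: f b.
Proof. by move=> fa; case: (f2_cases k) => ->; rewrite ?scale0r ?scale1r ?(add0f fa). Qed.

Lemma sig_lin (f : vec s -> vec s) (x : Defs.half s) v : additive_f f ->
  \sum_b x b *: (f b + v) = f (sig x) + par x *: v.
Proof.
move=> fa; rewrite (eq_bigr (fun b => x b *: f b + x b *: v)); last by move=> b _; rewrite scalerDr.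
rewrite big_split /= -scaler_suml /sig (big_morph f fa (add0f fa)).
by congr (_ + _); apply: eq_bigr => b _; rewrite f2_scale.
Qed.

Lemma sig_shift (x : Defs.half s) v : sig [ffun a => x (a + v)] = sig x + par x *: v.
Proof.
rewrite /sig (reindex_inj (addIr v)) /=.
rewrite (eq_bigr (fun b => x b *: (id b + v))); last by move=> b _; rewrite ffunE addvK.
have idadd : additive_f (@id (vec s)) by [].
by rewrite sig_lin.
Qed.

Lemma par_shift (x : Defs.half s) v : par [ffun a => x (a + v)] = par x.
Proof.
rewrite /par (reindex_inj (addIr v)) /=.
by apply: eq_bigr => b _; rewrite ffunE addvK.
Qed.

Lemma trp_inv v w p : (trp v w)^-1%g p = trp v w p.
Proof. by apply: (@perm_inj _ (trp v w)); rewrite permKV !trpE trfK. Qed.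

Lemma lhalf_trp v w y : lhalf (permw (trp v w) y) = [ffun a => lhalf y (a + v)].
Proof. by apply/ffunP => a; rewrite !ffunE trp_inv trpE /= ?ffunE. Qed.
Lemma rhalf_trp v w y : rhalf (permw (trp v w) y) = [ffun a => rhalf y (a + w)].
Proof. by apply/ffunP => a; rewrite !ffunE trp_inv trpE /= ?ffunE. Qed.

Lemma trp_PAut (rho : vec s -> vec s) v w : rho 0 = 0 -> in_PAut (S rho) (trp v w).
Proof.
move=> r0; apply: in_PAutI => y; rewrite !S_iff // => /and3P[/eqP PL /eqP PR /eqP SR].
by rewrite lhalf_trp rhalf_trp !sig_shift !par_shift PL PR !scale0r !addr0 SR !eqxx.
Qed.

End PAutGen.

Section PAutLE.
Variable s : nat.
Variable rho : vec s -> vec s.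
Hypothesis rho0 : rho 0 = 0.
Variables P Q : vec s -> vec s.
Hypothesis Padd : additive_f P.
Hypothesis Qadd : additive_f Q.
Hypothesis Pinj : injective P.
Hypothesis Qinj : injective Q.
Hypothesis PQ : forall v, rho (Q (rho v)) = P v.
Implicit Types a b c d v w : vec s.

Lemma swp_invL v w b : (swp Pinj Qinj v w)^-1%g (inl (Q b + v)) = inr b.
Proof.
have E : swp Pinj Qinj v w (inr b) = inl (Q b + v) by rewrite swpE.
by rewrite -E permK.
Qed.
Lemma swp_invR v w a : (swp Pinj Qinj v w)^-1%g (inr (P a + w)) = inl a.
Proof.
have E : swp Pinj Qinj v w (inl a) = inr (P a + w) by rewrite swpE.
by rewrite -E permK.
Qed.

Lemma sig_swpL v w y : sig (lhalf (permw (swp Pinj Qinj v w) y)) = Q (sig (rhalf y)) + par (rhalf y) *: v.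
Proof.
rewrite -sig_lin // /sig (reindex_inj (@addr_inj _ Q v Qinj)) /=.
by apply: eq_bigr => b _; rewrite !ffunE swp_invL.
Qed.
Lemma sig_swpR v w y : sig (rhalf (permw (swp Pinj Qinj v w) y)) = P (sig (lhalf y)) + par (lhalf y) *: w.
Proof.
rewrite -sig_lin // /sig (reindex_inj (@addr_inj _ P w Pinj)) /=.
by apply: eq_bigr => b _; rewrite !ffunE swp_invR.
Qed.
Lemma par_swpL v w y : par (lhalf (permw (swp Pinj Qinj v w) y)) = par (rhalf y).
Proof.
rewrite /par (reindex_inj (@addr_inj _ Q v Qinj)) /=.
by apply: eq_bigr => b _; rewrite !ffunE swp_invL.
Qed.
Lemma par_swpR v w y : par (rhalf (permw (swp Pinj Qinj v w) y)) = par (lhalf y).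
Proof.
rewrite /par (reindex_inj (@addr_inj _ P w Pinj)) /=.
by apply: eq_bigr => b _; rewrite !ffunE swp_invR.
Qed.

Lemma swp_PAut v w : in_PAut (S rho) (swp Pinj Qinj v w).
Proof.
apply: in_PAutI => y; rewrite !S_iff // => /and3P[/eqP PL /eqP PR /eqP SR].
rewrite sig_swpL sig_swpR par_swpL par_swpR PL PR !scale0r !addr0 SR PQ !eqxx //.
Qed.

Lemma LE_CT : coord_transitive (S rho).
Proof.
case=> [a|b] [a'|b'].
- exists (trp (a + a') 0); split; first exact: trp_PAut.
  by rewrite trpE /= addKv.
- exists (swp Pinj Qinj 0 (P a + b')); split; first exact: swp_PAut.
  by rewrite swpE /= addKv.
- exists (swp Pinj Qinj (Q b + a') 0); split; first exact: swp_PAut.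
  by rewrite swpE /= addKv.
- exists (trp 0 (b + b')); split; first exact: trp_PAut.
  by rewrite trpE /= addKv.
Qed.

End PAutLE.

Lemma LE_CT' s (rho : vec s -> vec s) : rho 0 = 0 -> LE rho -> coord_transitive (S rho).
Proof. by move=> r0 [P [Q [Pa Qa Pi Qi PQ]]]; exact: (@LE_CT s rho r0 P Q Pa Qa Pi Qi PQ). Qed.

Section AutGen.
Variable s : nat.
Implicit Types (C : {set word s}) (x y u : word s) (pi : {perm pos s}).

Lemma word_dbl x : x + x = 0.
Proof. by apply/ffunP => i; rewrite !ffunE f2_dbl. Qed.
Lemma permwD pi x y : permw pi (x + y) = permw pi x + permw pi y.
Proof. by apply/ffunP => i; rewrite !ffunE. Qed.
Lemma permw0 pi : permw pi 0 = 0.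
Proof. by apply/ffunP => i; rewrite !ffunE. Qed.
Lemma permwM pi1 pi2 y : permw (pi1 * pi2)%g y = permw pi2 (permw pi1 y).
Proof. by apply/ffunP => i; rewrite !ffunE invMg permM. Qed.

Definition af x pi y := x + permw pi y.

Lemma in_AutI C x pi : (forall y, y \in C -> af x pi y \in C) -> in_Aut C x pi.
Proof.
move=> H; rewrite /in_Aut eqEcard; apply/andP; split.
  by apply/subsetP => _ /imsetP[y Hy ->]; exact: H.
by rewrite card_imset // => y1 y2 /addrI; exact: permw_inj.
Qed.

Lemma in_AutP C x pi : in_Aut C x pi -> forall y, y \in C -> af x pi y \in C.
Proof. by move=> /eqP H y Hy; rewrite -H; apply/imsetP; exists y. Qed.

Lemma in_AutM C x1 pi1 x2 pi2 : in_Aut C x1 pi1 -> in_Aut C x2 pi2 ->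
  in_Aut C (x2 + permw pi2 x1) (pi1 * pi2)%g.
Proof.
move=> H1 H2; apply: in_AutI => y Hy.
have -> : af (x2 + permw pi2 x1) (pi1 * pi2) y = af x2 pi2 (af x1 pi1 y).
  by rewrite /af permwM permwD addrA.
by apply: (in_AutP H2); apply: (in_AutP H1).
Qed.

Lemma afM x1 pi1 x2 pi2 y :
  af (x2 + permw pi2 x1) (pi1 * pi2)%g y = af x2 pi2 (af x1 pi1 y).
Proof. by rewrite /af permwM permwD addrA. Qed.

Lemma in_AutV C x pi : in_Aut C x pi -> in_Aut C (permw pi^-1 x) pi^-1%g.
Proof.
move=> /eqP H; apply/eqP.
rewrite -{1}H -imset_comp (eq_imset (g := id)) ?imset_id // => z /=.
by rewrite -permwD addrA word_dbl add0r permwK.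
Qed.

Lemma afV x pi : af (permw pi^-1 x) pi^-1%g x = 0.
Proof. by rewrite /af word_dbl. Qed.

Lemma af0 x pi : af x pi 0 = x.
Proof. by rewrite /af permw0 addr0. Qed.

Lemma Aut_trans_C C : (forall c, c \in C -> exists pi, in_Aut C c pi) ->
  Aut_transitive_on C C.
Proof.
move=> H u v Hu Hv.
have [pu Hpu] := H u Hu; have [pv Hpv] := H v Hv.
exists (v + permw pv (permw pu^-1 u)), (pu^-1 * pv)%g; split.
  exact: in_AutM (in_AutV Hpu) Hpv.
by rewrite -/(af _ _ u) afM afV af0.
Qed.

Definition delta (i : pos s) : word s := [ffun j => (j == i)%:R].

Lemma permw_delta pi i : permw pi (delta i) = delta (pi i).
Proof.
apply/ffunP => j; rewrite !ffunE; congr (_%:R).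
by rewrite -(inj_eq (@perm_inj _ pi)) permKV.
Qed.

Lemma neighborP C u : u \in neighbors C -> exists c i, c \in C /\ u = c + delta i.
Proof.
rewrite inE => /andP[_ /existsP[c /andP[Hc /eqP H1]]].
have /cards1P [i Ei] := introT eqP H1.
exists c, i; split => //; apply/ffunP => j; rewrite !ffunE.
have Ej : (j \in [set i | u i != c i]) = (j \in [set i]) by rewrite Ei.
rewrite !inE in Ej; move: Ej.
case: (j == i) => /=.
  by case: (f2_cases (u j)) => ->; case: (f2_cases (c j)) => -> //; rewrite ?eqxx //= => _; apply/val_inj.
by move/negbFE/eqP ->; rewrite addr0.
Qed.

Lemma Aut_trans_N C : coord_transitive C ->
  (forall c, c \in C -> exists pi, in_Aut C c pi) ->
  Aut_transitive_on C (neighbors C).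
Proof.
move=> CT H u v /neighborP [c [i [Hc ->]]] /neighborP [c' [j [Hc' ->]]].
have [p1 Hp1] := H c Hc; have [p3 Hp3] := H c' Hc'.
have [p2 [Hp2 E2]] := CT (p1^-1%g i) (p3^-1%g j).
have Hp2' : in_Aut C 0 p2.
  move/eqP: Hp2 => Hp2; rewrite /in_Aut -{2}Hp2; apply/eqP/eq_imset => y; exact: add0r.
set A1 := in_AutV Hp1.
have A12 := in_AutM A1 Hp2'.
have A123 := in_AutM A12 Hp3.
eexists; eexists; split; first exact: A123.
rewrite -/(af _ _ _) !afM.
have -> : af (permw p1^-1 c) p1^-1%g (c + delta i) = delta (p1^-1%g i).
  by rewrite /af permwD addrA word_dbl add0r permw_delta.
rewrite /af permw_delta E2 add0r permw_delta permKV.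
by [].
Qed.

End AutGen.

Definition PR s (rho : vec s -> vec s) := forall a, exists L1 L2 : vec s -> vec s,
  [/\ additive_f L1, additive_f L2, injective L1, injective L2 &
      forall a', rho (a + L1 a') = rho a + L2 (rho a')].

Lemma PR_prod r r' (tau : vec r -> vec r) (tau' : vec r' -> vec r') :
  PR tau -> PR tau' -> PR (catperm tau tau').
Proof.
move=> H H' a.
have [L1 [L2 [a1 a2 i1 i2 E]]] := H (lsubmx a).
have [L1' [L2' [a1' a2' i1' i2' E']]] := H' (rsubmx a).
exists (pairf L1 L1'), (pairf L2 L2'); split.
- exact: pairf_add.
- exact: pairf_add.
- exact: pairf_inj.
- exact: pairf_inj.
move=> a'; rewrite /catperm /pairf lsubD rsubD !row_mxKl !row_mxKr E E'.
by rewrite add_row_mx.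
Qed.

Section PRAut.
Variable s : nat.
Implicit Types a b v w : vec s.

Definition linf (L1 L2 : vec s -> vec s) (p : pos s) : pos s :=
  match p with inl a => inl (L1 a) | inr b => inr (L2 b) end.
Lemma linf_inj L1 L2 : injective L1 -> injective L2 -> injective (linf L1 L2).
Proof. by move=> i1 i2 [x|x] [y|y] //= [] => [/i1|/i2] ->. Qed.

Lemma lhalfD (x y : word s) : lhalf (x + y) = lhalf x + lhalf y.
Proof. by apply/ffunP => i; rewrite !ffunE. Qed.
Lemma rhalfD (x y : word s) : rhalf (x + y) = rhalf x + rhalf y.
Proof. by apply/ffunP => i; rewrite !ffunE. Qed.

Lemma sig_lin0 (f : vec s -> vec s) (x : Defs.half s) : additive_f f ->
  \sum_b x b *: f b = f (sig x).
Proof.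
move=> fa; have := sig_lin x 0 fa; rewrite scaler0 addr0 => <-.
by apply: eq_bigr => b _; rewrite addr0.
Qed.

Lemma PR_inAut (rho : vec s -> vec s) : rho 0 = 0 -> PR rho ->
  forall c, c \in S rho -> exists pi, in_Aut (S rho) c pi.
Proof.
move=> r0 HPR c Hc.
have [L1 [L2 [a1 a2 i1 i2 E]]] := HPR (sig (lhalf c)).
exists (perm (linf_inj i1 i2)).
set pi := perm (linf_inj i1 i2).
have invL : forall b, pi^-1%g (inl (L1 b)) = inl b.
  move=> b; have E1 : pi (inl b) = inl (L1 b) by rewrite permE.
  by rewrite -E1 permK.
have invR : forall b, pi^-1%g (inr (L2 b)) = inr b.
  move=> b; have E1 : pi (inr b) = inr (L2 b) by rewrite permE.
  by rewrite -E1 permK.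
have sL : forall y, sig (lhalf (permw pi y)) = L1 (sig (lhalf y)).
  move=> y; rewrite -sig_lin0 // /sig (reindex_inj i1) /=.
  by apply: eq_bigr => b _; rewrite !ffunE invL.
have sR : forall y, sig (rhalf (permw pi y)) = L2 (sig (rhalf y)).
  move=> y; rewrite -sig_lin0 // /sig (reindex_inj i2) /=.
  by apply: eq_bigr => b _; rewrite !ffunE invR.
have pL : forall y, par (lhalf (permw pi y)) = par (lhalf y).
  move=> y; rewrite /par (reindex_inj i1) /=.
  by apply: eq_bigr => b _; rewrite !ffunE invL.
have pR : forall y, par (rhalf (permw pi y)) = par (rhalf y).
  move=> y; rewrite /par (reindex_inj i2) /=.
  by apply: eq_bigr => b _; rewrite !ffunE invR.
move: (Hc); rewrite S_iff // => /and3P[/eqP cL /eqP cR /eqP cS].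
apply: in_AutI => y; rewrite /af !S_iff // => /and3P[/eqP yL /eqP yR /eqP yS].
rewrite lhalfD rhalfD !sigD !parD sL sR pL pR cL cR yL yR addr0 cS yS E !eqxx.
by [].
Qed.

End PRAut.

Lemma GA_form s (g : {perm vec s}) : g \in GA s ->
  exists t (M : 'M['F_2]_s), M \in unitmx /\ forall b, g b = t + b *m M.
Proof.
rewrite inE => /existsP[t /existsP[M /andP[HM /forallP H]]].
by exists t, M; split => // b; exact/eqP/H.
Qed.

Lemma reg_PR s (rho : {perm vec s}) : induced_by_regular_aut rho -> PR rho.
Proof.
move=> [G [sGA reg [T [HT HTg]]]] a.
have [ga [[gaG ga0] _]] := reg 0 a.
have [t [M [HM Hg]]] := GA_form (subsetP sGA _ gaG).
have ht : t = a by rewrite -ga0 Hg mul0mx addr0.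
have TgaG : T ga \in G := Aut_closed HT gaG.
have [t' [M' [HM' Hg']]] := GA_form (subsetP sGA _ TgaG).
have ht' : t' = rho a by rewrite -ga0 -HTg // Hg' mul0mx addr0.
exists (fun b => b *m M), (fun b => b *m M'); split.
- by move=> x y; exact: mulmxDl.
- by move=> x y; exact: mulmxDl.
- exact: can_inj (mulmxK HM).
- exact: can_inj (mulmxK HM').
move=> a'; have [ga' [[ga'G ga'0] _]] := reg 0 a'.
have E2 := HTg _ (groupM ga'G gaG).
have /morphicP HM2 := Aut_morphic HT.
rewrite HM2 // !permM ga'0 (HTg _ ga'G) ga'0 Hg Hg' ht ht' in E2.
by rewrite -E2.
Qed.

Unset Implicit Arguments. Set Strict Implicit.

Theorem theorem6 (r r' : nat) (hr : (0 < r)%N) (hr' : (0 < r')%N)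
  (tau : {perm vec r}) (tau' : {perm vec r'})
  (htau : tau 0 = 0) (htau' : tau' 0 = 0) :
  [/\ (point_transitive (SQS tau) -> point_transitive (SQS tau') ->
       point_transitive (SQS (catperm tau tau'))),
      (coord_transitive (S tau) -> coord_transitive (S tau') ->
       coord_transitive (S (catperm tau tau')))
    & (induced_by_regular_aut tau -> induced_by_regular_aut tau' ->
       coord_transitive (S tau) -> coord_transitive (S tau') ->
       neighbor_transitive (S (catperm tau tau')))].
Proof.
have c0 := catperm0 htau htau'.
have part2 : coord_transitive (S tau) -> coord_transitive (S tau') ->
       coord_transitive (S (catperm tau tau')).
  move=> CT1 CT2; apply: LE_CT' => //; apply: LE_prod; apply: PT_LE => //;
    apply: CT_PT => //; exact: perm_inj.
split => //.
- move=> PT1 PT2; apply: LE_PT' => //; apply: LE_prod; exact: PT_LE.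
move=> R1 R2 CT1 CT2.
have HPR : PR (catperm tau tau') by apply: PR_prod; exact: reg_PR.
split.
- apply: Aut_trans_C; exact: PR_inAut.
- apply: Aut_trans_N; first exact: part2.
  exact: PR_inAut.
Qed.
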